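(* Let $F\in\{\triangle_0,\mathcal{T}\mathbb{R}_0,\mathcal{T}\mathbb{C}_0,\mathcal{T}\triangle_0\}$. Define $H:F\times[0,1]\to F$ by $H(0,t)=0$ and $H(x,t)=x|x|^{-t}$ for $x\ne0$. Then $H$ is a hyperfield homotopy. Moreover $H_0$ is the identity and $H_1(x)=\operatorname{ph}(x)$.
   Context: Hyperfields. A hyperfield $(F,\odot,\boxplus,1,0)$ has the following data and axioms. - $\odot$ is a commutative multiplication and $\boxplus$ is a hyperaddition assigning to each $x,y$ a nonempty subset $x\boxplus y\subseteq F$ (extended to subsets by unions). - $\boxplus$ is commutative and associative, and $x\boxplus 0=\{x\}$. - Each $x$ has a unique $-x$ with $0\in x\boxplus(-x)$, and $x\in y\boxplus z \iff z\in x\boxplus(-y)$. - $(F\setminus\{0\},\odot,1)$ is an abelian group, $0\odot x=0$, and $x\odot(y\boxplus z)=(x\odot y)\boxplus(x\odot z)$. A homomorphism $h$ satisfies $h(0)=0$, $h(1)=1$, $h(xy)=h(x)h(y)$ and $h(x\boxplus y)\subseteq h(x)\boxplus h(y)$. Topological hyperfields. A topological hyperfield is a hyperfield with a topology in which $F\setminus\{0\}$ is open, multiplication is continuous, and inversion on $F^\times$ is continuous. If $T$ is the topology, the 0-coarse topology has as open sets $F$ together with all $U\in T$ with $0\notin U$. A hyperfield homotopy between topological hyperfields $F,F'$ is a continuous $H:F\times[0,1]\to F'$ such that each $H_t=H(\cdot,t)$ is a hyperfield homomorphism. The hyperfields in the claim all use the usual multiplication of $\mathbb{C}$. - $\triangle=\mathbb{R}_{\ge0}$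 with $a\boxplus b=[|a-b|,a+b]$. - $\mathcal{T}\triangle=\mathbb{R}_{\ge0}$ with $a\boxplus b=\{\max(a,b)\}$ if $a\ne b$, and $a\boxplus a=[0,a]$. - $\mathcal{T}\mathbb{R}=\mathbb{R}$ with $a\boxplus b=\{a\}$ if $|a|>|b|$ or $a=b$, and $a\boxplus(-a)=[-|a|,|a|]$. - $\mathcal{T}\mathbb{C}=\mathbb{C}$ with the following hyperaddition: $a\boxplus b=\{a\}$ if $|a|>|b|$; $a\boxplus(-a)$ is the closed disk $\{x:|x|\le|a|\}$; if $|a|=|b|$ and $b\ne-a$, then $a\boxplus b$ is the shortest closed arc from $a$ to $b$ on the circle of radius $|a|$ centered at $0$. The subscript $0$ means the 0-coarse topology derived from the usual Euclidean topology. $\operatorname{ph}(x)=x/|x|$ for $x\ne0$, and $\operatorname{ph}(0)=0$. *)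

(* Defs.v *)
From Stdlib Require Import Reals Lra.
Open Scope R_scope.

Definition C : Type := (R * R)%type.
Definition C0 : C := (0, 0).
Definition C1 : C := (1, 0).
Definition Re (z : C) : R := fst z.
Definition Im (z : C) : R := snd z.
Definition Cmul (z w : C) : C :=
  (fst z * fst w - snd z * snd w, fst z * snd w + snd z * fst w).
Definition Copp (z : C) : C := (- fst z, - snd z).
Definition Cscale (r : R) (z : C) : C := (r * fst z, r * snd z).
Definition Cnorm (z : C) : R := sqrt (fst z * fst z + snd z * snd z).

Lemma Ceq_dec : forall z w : C, {z = w} + {z <> w}.
Proof.
  intros [a b] [c d].
  destruct (Req_EM_T a c) as [H1|H1]; [destruct (Req_EM_T b d) as [H2|H2]|].
  - left; subst; reflexivity.
  - right; intros H; inversion H; contradiction.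
  - right; intros H; inversion H; contradiction.
Defined.

(** rotation of z by angle th (multiplication by e^{i th}) *)
Definition Crot (th : R) (z : C) : C :=
  (fst z * cos th - snd z * sin th, fst z * sin th + snd z * cos th).

Definition ph (x : C) : C :=
  if Ceq_dec x C0 then C0 else Cscale (/ Cnorm x) x.

Definition Hmap (x : C) (t : R) : C :=
  if Ceq_dec x C0 then C0 else Cscale (Rpower (Cnorm x) (- t)) x.

(** * The four hyperfields (all with the usual multiplication of C) *)
Inductive HF : Type := Tri | TTri | TR | TC.

(** carriers, as subsets of C:  triangle, T-triangle = R_{>=0};  TR = R;  TC = C *)
Definition car (F : HF) (x : C) : Prop :=
  match F with
  | Tri | TTri => Im x = 0 /\ 0 <= Re x
  | TR => Im x = 0
  | TC => True
  end.

(** z lies on the shortest closed arc from a to b on the circle of radius |a|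
    (used only when |a| = |b| and b <> -a): b = e^{i phi} a with |phi| < pi,
    and z = e^{i theta} a with theta between 0 and phi. *)
Definition on_short_arc (a b z : C) : Prop :=
  exists phi, - PI < phi < PI /\ b = Crot phi a /\
    exists theta, Rmin 0 phi <= theta <= Rmax 0 phi /\ z = Crot theta a.

(** hadd F x y z  means  z \in x \boxplus y  (for x, y, z in the carrier of F) *)
Definition hadd (F : HF) (a b z : C) : Prop :=
  match F with
  | Tri => Rabs (Re a - Re b) <= Re z <= Re a + Re b
  | TTri => (Re a <> Re b /\ Re z = Rmax (Re a) (Re b))
            \/ (Re a = Re b /\ 0 <= Re z <= Re a)
  | TR => (Rabs (Re a) > Rabs (Re b) /\ z = a)
          \/ (Rabs (Re b) > Rabs (Re a) /\ z = b)
          \/ (a = b /\ z = a)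
          \/ (b = Copp a /\ - Rabs (Re a) <= Re z <= Rabs (Re a))
  | TC => (Cnorm a > Cnorm b /\ z = a)
          \/ (Cnorm b > Cnorm a /\ z = b)
          \/ (b = Copp a /\ Cnorm z <= Cnorm a)
          \/ (Cnorm a = Cnorm b /\ b <> Copp a /\ on_short_arc a b z)
  end.

Definition hf_hom (F F' : HF) (h : C -> C) : Prop :=
  (forall x, car F x -> car F' (h x)) /\
  h C0 = C0 /\ h C1 = C1 /\
  (forall x y, car F x -> car F y -> h (Cmul x y) = Cmul (h x) (h y)) /\
  (forall x y z, car F x -> car F y -> car F z -> hadd F x y z ->
      hadd F' (h x) (h y) (h z)).

Definition eopen (F : HF) (U : C -> Prop) : Prop :=
  (forall x, U x -> car F x) /\
  forall x, U x -> exists e, 0 < e /\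
     forall y, car F y -> Cnorm (fst y - fst x, snd y - snd x) < e -> U y.

Definition open0 (F : HF) (U : C -> Prop) : Prop :=
  (forall x, U x <-> car F x) \/ (eopen F U /\ ~ U C0).

Definition prod_open (F : HF) (W : C -> R -> Prop) : Prop :=
  (forall x t, W x t -> car F x /\ 0 <= t <= 1) /\
  forall x t, W x t -> exists V, open0 F V /\ V x /\ exists e, 0 < e /\
     forall y s, V y -> 0 <= s <= 1 -> Rabs (s - t) < e -> W y s.

Definition continuous0 (F F' : HF) (H : C -> R -> C) : Prop :=
  forall U, open0 F' U ->
    prod_open F (fun x t => (car F x /\ 0 <= t <= 1) /\ U (H x t)).

Definition hf_homotopy (F F' : HF) (H : C -> R -> C) : Prop :=
  (forall x t, car F x -> 0 <= t <= 1 -> car F' (H x t)) /\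
  continuous0 F F' H /\
  (forall t, 0 <= t <= 1 -> hf_hom F F' (fun x => H x t)).

(* Main.v *)
From Stdlib Require Import Reals Lra.
From Coquelicot Require Import Coquelicot.
Require Import Defs.
Open Scope R_scope.

Ltac absr := unfold Rabs in *; repeat match goal with
  | |- context [Rcase_abs ?x] => destruct (Rcase_abs x)
  | H : context [Rcase_abs ?x] |- _ => destruct (Rcase_abs x)
  end; lra.

Lemma Cnorm_nonneg x : 0 <= Cnorm x.
Proof. apply sqrt_pos. Qed.

Lemma Cnorm_C0 : Cnorm C0 = 0.
Proof. unfold Cnorm, C0; simpl. replace (0*0+0*0) with 0 by ring. apply sqrt_0. Qed.

Lemma Cnorm_eq0 x : Cnorm x = 0 -> x = C0.
Proof.
  destruct x as [a b]; unfold Cnorm; simpl; intro H.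
  apply sqrt_eq_0 in H; [|nra].
  assert (a = 0) by nra. assert (b = 0) by nra. subst; reflexivity.
Qed.

Lemma Cnorm_pos x : x <> C0 -> 0 < Cnorm x.
Proof.
  intro H. destruct (Cnorm_nonneg x) as [h|h]; auto.
  exfalso; apply H, Cnorm_eq0; auto.
Qed.

Lemma Rpower_pos a b : 0 < Rpower a b.
Proof. apply exp_pos. Qed.

Lemma Hmap_eq y s : Hmap y s = Cscale (Rpower (Cnorm y) (- s)) y.
Proof.
  unfold Hmap. destruct (Ceq_dec y C0) as [e|e]; auto.
  subst; unfold Cscale, C0; simpl; f_equal; ring.
Qed.

Lemma Hmap_C0 t : Hmap C0 t = C0.
Proof. unfold Hmap; destruct (Ceq_dec C0 C0); congruence. Qed.

Lemma Cnorm_scale r x : 0 <= r -> Cnorm (Cscale r x) = r * Cnorm x.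
Proof.
  intro Hr; destruct x as [a b]; unfold Cnorm, Cscale; simpl.
  replace (r*a*(r*a)+r*b*(r*b)) with ((r*r)*(a*a+b*b)) by ring.
  rewrite sqrt_mult_alt by nra. rewrite sqrt_square; auto.
Qed.

Lemma Cnorm_mul x y : Cnorm (Cmul x y) = Cnorm x * Cnorm y.
Proof.
  destruct x as [a b], y as [c d]; unfold Cnorm, Cmul; simpl.
  rewrite <- sqrt_mult by nra. f_equal; ring.
Qed.

Lemma Cnorm_opp x : Cnorm (Copp x) = Cnorm x.
Proof. destruct x; unfold Cnorm, Copp; simpl; f_equal; ring. Qed.

Lemma Hmap_opp x t : Hmap (Copp x) t = Copp (Hmap x t).
Proof.
  rewrite !Hmap_eq, Cnorm_opp. destruct x; unfold Cscale, Copp; simpl; f_equal; ring.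
Qed.

Definition ff (t r : R) := Rpower r (- t) * r.

Lemma Cnorm_Hmap x t : Cnorm (Hmap x t) = ff t (Cnorm x).
Proof. rewrite Hmap_eq, Cnorm_scale; [reflexivity|]. left; apply Rpower_pos. Qed.

Lemma ff_0 t : ff t 0 = 0.
Proof. unfold ff; ring. Qed.

Lemma ff_pow t r : 0 < r -> ff t r = Rpower r (1 - t).
Proof.
  intro h; unfold ff. replace (1 - t) with (-t + 1) by ring.
  rewrite Rpower_plus, Rpower_1; auto.
Qed.

Lemma ff_pos t r : 0 < r -> 0 < ff t r.
Proof. intro; rewrite ff_pow; auto; apply Rpower_pos. Qed.

Lemma ff_mono t r1 r2 : t <= 1 -> 0 <= r1 <= r2 -> ff t r1 <= ff t r2.
Proof.
  intros Ht [h1 h2]. destruct h1 as [h1|h1].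
  - rewrite !ff_pow by lra. destruct (Rle_lt_or_eq_dec _ _ h2) as [h|h].
    + destruct (Rle_lt_or_eq_dec t 1 Ht) as [h'|h'].
      * left; apply Rlt_Rpower_l; lra.
      * subst; replace (1-1) with 0 by ring; rewrite !Rpower_O; lra.
    + subst; lra.
  - subst; rewrite ff_0. destruct (Rle_lt_or_eq_dec _ _ h2) as [h|h].
    + left; apply ff_pos; auto.
    + subst; rewrite ff_0; lra.
Qed.

Lemma ff_strict t r1 r2 : t < 1 -> 0 <= r1 < r2 -> ff t r1 < ff t r2.
Proof.
  intros Ht [h1 h2]. destruct h1 as [h1|h1].
  - rewrite !ff_pow by lra. apply Rlt_Rpower_l; lra.
  - subst; rewrite ff_0; apply ff_pos; auto.
Qed.

Lemma ff_one r : 0 < r -> ff 1 r = 1.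
Proof. intro; rewrite ff_pow; auto. replace (1-1) with 0 by ring; apply Rpower_O; auto. Qed.

Lemma ff_nonneg t r : 0 <= r -> 0 <= ff t r.
Proof. intros [h|h]; [left; apply ff_pos; auto| subst; rewrite ff_0; lra]. Qed.

Lemma Rpower_ge_base y s : 0 < y <= 1 -> 0 <= s <= 1 -> y <= Rpower y s.
Proof.
  intros Hy Hs. rewrite <- (Rpower_1 y) at 1 by lra. unfold Rpower.
  assert (ln y <= 0).
  { destruct (Rle_lt_or_eq_dec _ _ (proj2 Hy)) as [h|h].
    - rewrite <- ln_1; left; apply ln_increasing; lra.
    - subst; rewrite ln_1; lra. }
  assert (1 * ln y <= s * ln y) by nra.
  destruct (Rle_lt_or_eq_dec _ _ H0) as [h|h].
  - left; apply exp_increasing; auto.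
  - rewrite h; lra.
Qed.

Lemma ff_sub t a b : 0 <= t <= 1 -> 0 <= a -> 0 <= b -> ff t (a + b) <= ff t a + ff t b.
Proof.
  intros Ht [ha|ha] [hb|hb].
  - rewrite !ff_pow by lra. set (c := a + b).
    assert (Ea : a = a / c * c) by (field; unfold c; lra).
    assert (Eb : b = b / c * c) by (field; unfold c; lra).
    assert (0 < a / c <= 1) by (split; [apply Rdiv_lt_0_compat; unfold c; lra|
       apply Rmult_le_reg_r with c; [unfold c; lra|]; rewrite <- Ea; unfold c; lra]).
    assert (0 < b / c <= 1) by (split; [apply Rdiv_lt_0_compat; unfold c; lra|
       apply Rmult_le_reg_r with c; [unfold c; lra|]; rewrite <- Eb; unfold c; lra]).
    rewrite Ea at 1. rewrite Eb at 1.
    assert (0 < c) by (unfold c; lra).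
    rewrite <- (Rpower_mult_distr (a/c)) by lra.
    rewrite <- (Rpower_mult_distr (b/c)) by lra.
    pose proof (Rpower_ge_base (a/c) (1-t) H ltac:(lra)).
    pose proof (Rpower_ge_base (b/c) (1-t) H0 ltac:(lra)).
    pose proof (Rpower_pos c (1-t)).
    assert (a / c + b / c = 1) by (unfold c; field; lra).
    nra.
  - subst; rewrite ?Rplus_0_r, ?Rplus_0_l, ?ff_0; lra.
  - subst; rewrite ?Rplus_0_r, ?Rplus_0_l, ?ff_0; lra.
  - subst; rewrite ?Rplus_0_r, ?Rplus_0_l, ?ff_0; lra.
Qed.

Lemma Cnorm_real a : Cnorm (a, 0) = Rabs a.
Proof. unfold Cnorm; simpl. replace (a*a+0*0) with (Rsqr a) by (unfold Rsqr; ring). apply sqrt_Rsqr_abs. Qed.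

Definition gg (t u : R) := Rpower (Rabs u) (- t) * u.

Lemma Hmap_real a t : Hmap (a, 0) t = (gg t a, 0).
Proof. rewrite Hmap_eq, Cnorm_real; unfold Cscale, gg; simpl; f_equal; ring. Qed.

Lemma gg_abs t u : Rabs (gg t u) = ff t (Rabs u).
Proof.
  unfold gg, ff. rewrite Rabs_mult, (Rabs_pos_eq (Rpower _ _)); auto.
  left; apply Rpower_pos.
Qed.

Lemma gg_nonneg t u : 0 <= u -> gg t u = ff t u.
Proof. intro h; unfold gg, ff; rewrite Rabs_pos_eq; auto. Qed.

Lemma gg_0 t : gg t 0 = 0.
Proof. unfold gg; ring. Qed.

Lemma gg_opp t u : gg t (- u) = - gg t u.
Proof. unfold gg; rewrite Rabs_Ropp; ring. Qed.

Lemma tri_real t a b z : 0 <= t <= 1 -> 0 <= a -> 0 <= b -> 0 <= z ->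
  Rabs (a - b) <= z <= a + b ->
  Rabs (ff t a - ff t b) <= ff t z <= ff t a + ff t b.
Proof.
  intros Ht ha hb hz [h1 h2].
  assert (ff t a <= ff t z + ff t b).
  { eapply Rle_trans; [apply (ff_mono t a (z + b)); [lra| absr]|]. apply ff_sub; lra. }
  assert (ff t b <= ff t z + ff t a).
  { eapply Rle_trans; [apply (ff_mono t b (z + a)); [lra| absr]|]. apply ff_sub; lra. }
  split.
  - apply Rabs_le; lra.
  - eapply Rle_trans; [apply (ff_mono t z (a + b)); lra|]. apply ff_sub; lra.
Qed.

Lemma ttri_real t a b z : 0 <= t <= 1 -> 0 <= a -> 0 <= b -> 0 <= z ->
  (a <> b /\ z = Rmax a b) \/ (a = b /\ 0 <= z <= a) ->
  (ff t a <> ff t b /\ ff t z = Rmax (ff t a) (ff t b)) \/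
  (ff t a = ff t b /\ 0 <= ff t z <= ff t a).
Proof.
  intros Ht ha hb hz [[h1 h2]|[h1 h2]].
  - destruct (Rlt_or_le t 1) as [ht|ht].
    + left. destruct (Rlt_or_le a b) as [hab|hab].
      * pose proof (ff_strict t a b ht (conj ha hab)).
        rewrite h2, !Rmax_right; lra.
      * assert (b < a) by lra. pose proof (ff_strict t b a ht (conj hb H)).
        rewrite h2, !Rmax_left; lra.
    + assert (t = 1) by lra; subst t.
      destruct ha as [ha|ha]; destruct hb as [hb|hb].
      * right. rewrite (ff_one a), (ff_one b) by lra. split; auto.
        assert (0 < z) by (rewrite h2; apply Rlt_le_trans with a; [lra|apply Rmax_l]).
        rewrite ff_one; lra.
      * subst b. left. rewrite ff_0, ff_one by lra. rewrite h2, Rmax_left by lra.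
        rewrite ff_one by lra. rewrite Rmax_left; lra.
      * subst a. left. rewrite ff_0, ff_one by lra. rewrite h2, Rmax_right by lra.
        rewrite ff_one by lra. rewrite Rmax_right; lra.
      * lra.
  - right. subst b. split; auto. split; [apply ff_nonneg; lra| apply ff_mono; lra].
Qed.

Lemma abs_one_cases x y : Rabs x = 1 -> Rabs y = 1 -> y = x \/ y = - x.
Proof. intros; absr. Qed.

Lemma TR_hom t ua ub uz : 0 <= t <= 1 -> hadd TR (ua,0) (ub,0) (uz,0) ->
  hadd TR (gg t ua, 0) (gg t ub, 0) (gg t uz, 0).
Proof.
  intros Ht H. unfold hadd, Re, Copp in *; simpl in *.
  destruct H as [[h1 h2]|[[h1 h2]|[[h1 h2]|[h1 h2]]]].
  - injection h2 as h2; subst uz.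
    destruct (Rlt_or_le t 1) as [ht|ht].
    + left; split; auto. rewrite !gg_abs. apply ff_strict; auto. split; [apply Rabs_pos| lra].
    + assert (t = 1) by lra; subst t.
      assert (Ha : Rabs (gg 1 ua) = 1) by (rewrite gg_abs, ff_one; [lra|pose proof (Rabs_pos ub); lra]).
      destruct (Req_dec ub 0) as [e|e].
      * subst ub. left. rewrite gg_0, Rabs_R0. split; [lra|auto].
      * assert (Hb : Rabs (gg 1 ub) = 1) by (rewrite gg_abs, ff_one; [lra|apply Rabs_pos_lt; auto]).
        destruct (abs_one_cases _ _ Ha Hb) as [E|E]; rewrite E.
        -- right; right; left; auto.
        -- right; right; right. split; [f_equal; lra|]. absr.
  - injection h2 as h2; subst uz.
    destruct (Rlt_or_le t 1) as [ht|ht].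
    + right; left; split; auto. rewrite !gg_abs. apply ff_strict; auto. split; [apply Rabs_pos| lra].
    + assert (t = 1) by lra; subst t.
      assert (Hb : Rabs (gg 1 ub) = 1) by (rewrite gg_abs, ff_one; [lra|pose proof (Rabs_pos ua); lra]).
      destruct (Req_dec ua 0) as [e|e].
      * subst ua. right; left. rewrite gg_0, Rabs_R0. split; [lra|auto].
      * assert (Ha : Rabs (gg 1 ua) = 1) by (rewrite gg_abs, ff_one; [lra|apply Rabs_pos_lt; auto]).
        destruct (abs_one_cases _ _ Ha Hb) as [E|E]; rewrite E.
        -- right; right; left; auto.
        -- right; right; right. split; [f_equal; lra|]. absr.
  - injection h1 as h1; injection h2 as h2; subst. right; right; left; auto.
  - injection h1 as h1; subst ub. right; right; right. split.
    + rewrite gg_opp; f_equal; lra.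
    + assert (Rabs uz <= Rabs ua) by absr.
      assert (Rabs (gg t uz) <= Rabs (gg t ua)).
      { rewrite !gg_abs. apply ff_mono; [lra|split; [apply Rabs_pos|auto]]. }
      absr.
Qed.

Lemma Crot_0 u : Crot 0 u = u.
Proof. destruct u; unfold Crot; simpl; rewrite cos_0, sin_0; f_equal; ring. Qed.

Lemma Cnorm_Crot th u : Cnorm (Crot th u) = Cnorm u.
Proof.
  destruct u as [a b]; unfold Cnorm, Crot; simpl. f_equal.
  pose proof (sin2_cos2 th) as E; unfold Rsqr in E.
  transitivity ((a*a+b*b)*(sin th * sin th + cos th * cos th)); [ring|].
  rewrite E; ring.
Qed.

Lemma Crot_scale th k u : Crot th (Cscale k u) = Cscale k (Crot th u).
Proof. destruct u; unfold Crot, Cscale; simpl; f_equal; ring. Qed.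

Lemma Cnorm1 u1 u2 : Cnorm (u1, u2) = 1 -> u1*u1+u2*u2 = 1.
Proof.
  unfold Cnorm; simpl; intro H.
  rewrite <- (sqrt_sqrt (u1*u1+u2*u2)) by nra. rewrite H; ring.
Qed.

Lemma arc u v : Cnorm u = 1 -> Cnorm v = 1 -> v <> Copp u ->
  exists phi, - PI < phi < PI /\ v = Crot phi u.
Proof.
  destruct u as [u1 u2], v as [v1 v2]. intros Hu Hv Hne.
  apply Cnorm1 in Hu; apply Cnorm1 in Hv.
  set (c := v1*u1+v2*u2). set (d := v2*u1 - v1*u2).
  assert (Hcd : c*c+d*d = 1).
  { transitivity ((u1*u1+u2*u2)*(v1*v1+v2*v2)); [unfold c, d; ring|]. rewrite Hu, Hv; ring. }
  assert (E1 : v1 = u1*c - u2*d).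
  { transitivity (v1*(u1*u1+u2*u2)); [rewrite Hu; ring| unfold c, d; ring]. }
  assert (E2 : v2 = u1*d + u2*c).
  { transitivity (v2*(u1*u1+u2*u2)); [rewrite Hu; ring| unfold c, d; ring]. }
  assert (Hc1 : -1 < c).
  { destruct (Rlt_or_le (-1) c) as [h|h]; auto. exfalso.
    assert (c = -1) by nra. assert (d = 0) by nra.
    apply Hne. unfold Copp; simpl. rewrite E1, E2, H, H0. f_equal; ring. }
  assert (Hc2 : c <= 1) by nra.
  assert (Hac : acos c < PI).
  { destruct (Rlt_or_le c 1) as [h|h].
    - apply acos_bound_lt; lra.
    - replace c with 1 by lra. rewrite acos_1. apply PI_RGT_0. }
  pose proof (acos_bound c) as Hb.
  assert (Hs : sin (acos c) = Rabs d).
  { rewrite sin_acos by lra. rewrite <- sqrt_Rsqr_abs. f_equal. unfold Rsqr; lra. }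
  pose proof (cos_acos c ltac:(lra)) as Hco.
  destruct (Rle_or_lt 0 d) as [hd|hd].
  - exists (acos c). split; [lra|]. unfold Crot; simpl.
    rewrite Hco, Hs, Rabs_pos_eq by lra. rewrite E1, E2 at 1. reflexivity.
  - exists (- acos c). split; [lra|]. unfold Crot; simpl.
    rewrite cos_neg, sin_neg, Hco, Hs, Rabs_left by lra.
    rewrite E1, E2 at 1. f_equal; ring.
Qed.

Lemma Copp_C0 : Copp C0 = C0.
Proof. unfold Copp, C0; simpl; f_equal; ring. Qed.

Lemma TC_hom t a b z : 0 <= t <= 1 -> hadd TC a b z ->
  hadd TC (Hmap a t) (Hmap b t) (Hmap z t).
Proof.
  intros Ht H. unfold hadd in *.
  rewrite !Cnorm_Hmap.
  destruct H as [[h1 h2]|[[h1 h2]|[[h1 h2]|[h1 [h2 h3]]]]].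
  - subst z. destruct (Rlt_or_le t 1) as [ht|ht].
    + left; split; auto. apply ff_strict; auto. split; [apply Cnorm_nonneg|lra].
    + assert (t = 1) by lra; subst t.
      assert (Ha : ff 1 (Cnorm a) = 1) by (apply ff_one; pose proof (Cnorm_nonneg b); lra).
      destruct (Ceq_dec b C0) as [e|e].
      * subst b. left. rewrite Cnorm_C0, ff_0. split; [lra|auto].
      * assert (Hb : ff 1 (Cnorm b) = 1) by (apply ff_one, Cnorm_pos; auto).
        destruct (Ceq_dec (Hmap b 1) (Copp (Hmap a 1))) as [E|E].
        -- right; right; left. split; auto; lra.
        -- right; right; right. split; [lra|]. split; auto.
           destruct (arc (Hmap a 1) (Hmap b 1)) as [phi [hp hr]];
             [rewrite Cnorm_Hmap; auto|rewrite Cnorm_Hmap; auto|auto|].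
           exists phi; split; auto; split; auto. exists 0. split.
           ++ split; [apply Rmin_l|apply Rmax_l].
           ++ rewrite Crot_0; auto.
  - subst z. destruct (Rlt_or_le t 1) as [ht|ht].
    + right; left; split; auto. apply ff_strict; auto. split; [apply Cnorm_nonneg|lra].
    + assert (t = 1) by lra; subst t.
      assert (Hb : ff 1 (Cnorm b) = 1) by (apply ff_one; pose proof (Cnorm_nonneg a); lra).
      destruct (Ceq_dec a C0) as [e|e].
      * subst a. right; left. rewrite Cnorm_C0, ff_0. split; [lra|auto].
      * assert (Ha : ff 1 (Cnorm a) = 1) by (apply ff_one, Cnorm_pos; auto).
        destruct (Ceq_dec (Hmap b 1) (Copp (Hmap a 1))) as [E|E].
        -- right; right; left. split; auto; lra.
        -- right; right; right. split; [lra|]. split; auto.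
           destruct (arc (Hmap a 1) (Hmap b 1)) as [phi [hp hr]];
             [rewrite Cnorm_Hmap; auto|rewrite Cnorm_Hmap; auto|auto|].
           exists phi; split; auto; split; auto. exists phi. split; auto.
           split; [apply Rmin_r|apply Rmax_r].
  - subst b. right; right; left. split; [apply Hmap_opp|].
    apply ff_mono; [lra|split; [apply Cnorm_nonneg|auto]].
  - destruct h3 as [phi [hp [hb [th [hth hz]]]]].
    assert (ha : a <> C0).
    { intro e; subst a. apply h2. rewrite Copp_C0. apply Cnorm_eq0. rewrite Cnorm_C0 in h1. lra. }
    set (k := Rpower (Cnorm a) (- t)).
    assert (Ea : Hmap a t = Cscale k a) by (rewrite Hmap_eq; reflexivity).
    assert (Eb : Hmap b t = Cscale k b) by (rewrite Hmap_eq, <- h1; reflexivity).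
    assert (Ez : Hmap z t = Cscale k z) by (rewrite Hmap_eq, hz, Cnorm_Crot, <- hz; reflexivity).
    assert (hk : 0 < k) by apply Rpower_pos.
    right; right; right. split; [rewrite h1; auto|]. split.
    + rewrite Ea, Eb. intro E. apply h2. destruct a as [a1 a2], b as [b1 b2].
      unfold Cscale, Copp in *; simpl in *. injection E as E1 E2.
      f_equal.
      * apply Rmult_eq_reg_l with k; [lra|lra].
      * apply Rmult_eq_reg_l with k; [lra|lra].
    + rewrite Ea, Eb, Ez. exists phi. split; auto. split.
      * rewrite hb, Crot_scale; auto.
      * exists th. split; auto. rewrite hz, Crot_scale; auto.
Qed.
Lemma cR (f : R -> R) x : continuity_pt f x -> continuous f x.
Proof. intro H; now apply continuity_pt_filterlim. Qed.

Lemma k_cont (x1 x2 t : R) : 0 < x1*x1+x2*x2 ->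
  continuous (fun p : (R*R)*R => exp (- snd p * ln (sqrt (fst (fst p) * fst (fst p) + snd (fst p) * snd (fst p))))) ((x1,x2),t).
Proof.
  intro Hp.
  assert (Hf1 : continuous (fun p : (R*R)*R => fst (fst p)) ((x1,x2),t)).
  { apply (continuous_comp fst fst). apply continuous_fst. apply continuous_fst. }
  assert (Hf2 : continuous (fun p : (R*R)*R => snd (fst p)) ((x1,x2),t)).
  { apply (continuous_comp fst snd). apply continuous_fst. apply continuous_snd. }
  assert (Hs : continuous (fun p : (R*R)*R => snd p) ((x1,x2),t)).
  { apply continuous_snd. }
  apply (continuous_comp _ exp).
  2:{ apply cR. apply derivable_continuous_pt. apply derivable_pt_exp. }
  apply (continuous_mult (K:=R_AbsRing)).
  { apply (continuous_opp (K:=R_AbsRing) (V:=R_NormedModule)). exact Hs. }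
  apply (continuous_comp _ ln).
  2:{ apply cR. simpl. apply derivable_continuous_pt. 
      exists (/ sqrt (x1*x1+x2*x2)). apply derivable_pt_lim_ln. apply sqrt_lt_R0; lra. }
  apply (continuous_comp _ sqrt).
  2:{ apply cR. simpl. apply sqrt_continuity_pt. exact Hp. }
  apply (continuous_plus (K:=R_AbsRing) (V:=R_NormedModule)).
  - apply (continuous_mult (K:=R_AbsRing)); assumption.
  - apply (continuous_mult (K:=R_AbsRing)); assumption.
Qed.

Lemma extract (g : (R*R)*R -> R) (x1 x2 t : R) : continuous g ((x1,x2),t) ->
  forall eps, 0 < eps -> exists d, 0 < d /\ forall y1 y2 s,
    Rabs (y1 - x1) < d -> Rabs (y2 - x2) < d -> Rabs (s - t) < d ->
    Rabs (g ((y1,y2),s) - g ((x1,x2),t)) < eps.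
Proof.
  intros Hc eps He.
  destruct (proj1 (filterlim_locally g _) Hc (mkposreal eps He)) as [d Hd].
  exists d. split. apply cond_pos.
  intros y1 y2 s H1 H2 H3.
  apply (Hd ((y1,y2),s)).
  split; [split|]; assumption.
Qed.

Lemma Hcomp x t eps : x <> C0 -> 0 < eps -> exists d, 0 < d /\ forall y s,
  Rabs (fst y - fst x) < d -> Rabs (snd y - snd x) < d -> Rabs (s - t) < d ->
  Rabs (fst (Hmap y s) - fst (Hmap x t)) < eps /\ Rabs (snd (Hmap y s) - snd (Hmap x t)) < eps.
Proof.
  intros Hx He. destruct x as [x1 x2].
  assert (Hp : 0 < x1*x1+x2*x2).
  { destruct (Rlt_or_le 0 (x1*x1+x2*x2)) as [h|h]; auto. exfalso; apply Hx.
    assert (x1 = 0) by nra. assert (x2 = 0) by nra. subst; reflexivity. }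
  pose proof (k_cont x1 x2 t Hp) as Hk.
  assert (Hf1 : continuous (fun p : (R*R)*R => fst (fst p)) ((x1,x2),t)).
  { apply (continuous_comp fst fst). apply continuous_fst. apply continuous_fst. }
  assert (Hf2 : continuous (fun p : (R*R)*R => snd (fst p)) ((x1,x2),t)).
  { apply (continuous_comp fst snd). apply continuous_fst. apply continuous_snd. }
  pose proof (continuous_mult (K:=R_AbsRing) _ _ _ Hk Hf1) as G1.
  pose proof (continuous_mult (K:=R_AbsRing) _ _ _ Hk Hf2) as G2.
  destruct (extract _ _ _ _ G1 eps He) as [d1 [hd1 D1]].
  destruct (extract _ _ _ _ G2 eps He) as [d2 [hd2 D2]].
  exists (Rmin d1 d2). split; [apply Rmin_pos; auto|].
  intros [y1 y2] s h1 h2 h3. simpl in h1, h2.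
  pose proof (Rmin_l d1 d2). pose proof (Rmin_r d1 d2).
  rewrite !Hmap_eq. split.
  - apply (D1 y1 y2 s); lra.
  - apply (D2 y1 y2 s); lra.
Qed.

Lemma car_H F x t : car F x -> car F (Hmap x t).
Proof.
  pose proof (Rpower_pos (Cnorm x) (- t)).
  rewrite Hmap_eq. set (r := Rpower (Cnorm x) (- t)) in *. clearbody r.
  destruct F; destruct x as [a b]; unfold car, Cscale, Re, Im in *; simpl in *;
    intros; auto.
  - destruct H0 as [h1 h2]; split; [rewrite h1; ring| apply Rmult_le_pos; lra].
  - destruct H0 as [h1 h2]; split; [rewrite h1; ring| apply Rmult_le_pos; lra].
  - rewrite H0; ring.
Qed.

Lemma abs_le_Cnorm1 a b : Rabs a <= Cnorm (a, b).
Proof.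
  unfold Cnorm; simpl. rewrite <- sqrt_Rsqr_abs. apply sqrt_le_1_alt. unfold Rsqr; nra.
Qed.

Lemma abs_le_Cnorm2 a b : Rabs b <= Cnorm (a, b).
Proof.
  unfold Cnorm; simpl. rewrite <- sqrt_Rsqr_abs. apply sqrt_le_1_alt. unfold Rsqr; nra.
Qed.

Lemma Cnorm_le_abs a b : Cnorm (a, b) <= Rabs a + Rabs b.
Proof.
  unfold Cnorm; simpl. pose proof (Rabs_pos a); pose proof (Rabs_pos b).
  rewrite <- (sqrt_square (Rabs a + Rabs b)) by lra. apply sqrt_le_1_alt.
  pose proof (Rsqr_abs a); pose proof (Rsqr_abs b); unfold Rsqr in *. nra.
Qed.

Lemma cont F : continuous0 F F Hmap.
Proof.
  intros U HU. split.
  - intros x t [[hc ht] _]; auto.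
  - intros x t [[hc ht] hU].
    destruct HU as [HU | [[HUc HUo] HU0]].
    + exists (car F). split; [left; tauto|]. split; auto. exists 1. split; [lra|].
      intros y s hy hs _. split; [auto|]. apply HU, car_H; auto.
    + assert (hx : x <> C0) by (intro e; subst; rewrite Hmap_C0 in hU; auto).
      destruct (HUo _ hU) as [e [he HUe]].
      destruct (Hcomp x t (e/2) hx ltac:(lra)) as [d [hd D]].
      destruct x as [x1 x2].
      set (m := Rmax (Rabs x1) (Rabs x2)).
      assert (hm1 : Rabs x1 <= m) by apply Rmax_l.
      assert (hm2 : Rabs x2 <= m) by apply Rmax_r.
      assert (hm3 : m = Rabs x1 \/ m = Rabs x2) by (unfold m, Rmax; destruct (Rle_dec _ _); auto).
      assert (hm : 0 < m).
      { destruct (Req_dec x1 0) as [e1|e1].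
        - destruct (Req_dec x2 0) as [e2|e2].
          + subst; exfalso; apply hx; reflexivity.
          + pose proof (Rabs_pos_lt _ e2); lra.
        - pose proof (Rabs_pos_lt _ e1); lra. }
      set (d1 := Rmin d m).
      assert (hd1 : 0 < d1) by (apply Rmin_pos; auto).
      assert (hd1a : d1 <= d) by apply Rmin_l.
      assert (hd1b : d1 <= m) by apply Rmin_r.
      exists (fun y => car F y /\ Rabs (fst y - x1) < d1 /\ Rabs (snd y - x2) < d1).
      split.
      * right. split; [split|].
        -- intros y [h _]; auto.
        -- intros y [hy [h1 h2]].
           exists (Rmin (d1 - Rabs (fst y - x1)) (d1 - Rabs (snd y - x2))).
           split; [apply Rmin_pos; lra|].
           intros y' hy' hn. split; auto.
           pose proof (Rmin_l (d1 - Rabs (fst y - x1)) (d1 - Rabs (snd y - x2))).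
           pose proof (Rmin_r (d1 - Rabs (fst y - x1)) (d1 - Rabs (snd y - x2))).
           pose proof (abs_le_Cnorm1 (fst y' - fst y) (snd y' - snd y)).
           pose proof (abs_le_Cnorm2 (fst y' - fst y) (snd y' - snd y)).
           split.
           ++ replace (fst y' - x1) with ((fst y' - fst y) + (fst y - x1)) by ring.
              eapply Rle_lt_trans; [apply Rabs_triang|]. lra.
           ++ replace (snd y' - x2) with ((snd y' - snd y) + (snd y - x2)) by ring.
              eapply Rle_lt_trans; [apply Rabs_triang|]. lra.
        -- intros [_ [h1 h2]]. unfold C0 in h1, h2; simpl in h1, h2.
           rewrite Rminus_0_l, Rabs_Ropp in h1, h2. lra.
      * split.
        -- split; auto. simpl. rewrite !Rminus_diag, Rabs_R0. lra.
        -- exists d. split; auto. intros y s [hy [h1 h2]] hs hst. split; [split; auto|].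
           apply HUe; [apply car_H; auto|].
           destruct (D y s) as [D1 D2]; simpl; try lra.
           eapply Rle_lt_trans; [apply Cnorm_le_abs|]. lra.
Qed.

Lemma Hmap_mul x y t : Hmap (Cmul x y) t = Cmul (Hmap x t) (Hmap y t).
Proof.
  rewrite !Hmap_eq, Cnorm_mul.
  destruct (Ceq_dec x C0) as [e|e].
  { subst; destruct y; unfold Cscale, Cmul, C0; simpl; f_equal; ring. }
  destruct (Ceq_dec y C0) as [e'|e'].
  { subst; destruct x; unfold Cscale, Cmul, C0; simpl; f_equal; ring. }
  rewrite <- Rpower_mult_distr by (apply Cnorm_pos; auto).
  destruct x, y; unfold Cscale, Cmul; simpl; f_equal; ring.
Qed.

Lemma hom F t : 0 <= t <= 1 -> hf_hom F F (fun x => Hmap x t).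
Proof.
  intro Ht. split; [intros; apply car_H; auto|].
  split; [apply Hmap_C0|].
  split.
  { rewrite Hmap_eq. unfold C1, Cnorm; simpl. replace (1*1+0*0) with 1 by ring.
    rewrite sqrt_1. unfold Rpower. rewrite ln_1, Rmult_0_r, exp_0. unfold Cscale; simpl; f_equal; ring. }
  split; [intros; apply Hmap_mul|].
  intros x y z hx hy hz H.
  destruct F.
  - destruct x as [a a'], y as [b b'], z as [c c']; unfold car, hadd, Re, Im in *; simpl in *.
    destruct hx as [-> hx], hy as [-> hy], hz as [-> hz].
    rewrite !Hmap_real; simpl. rewrite !gg_nonneg by lra. apply tri_real; auto.
  - destruct x as [a a'], y as [b b'], z as [c c']; unfold car, hadd, Re, Im in *; simpl in *.
    destruct hx as [-> hx], hy as [-> hy], hz as [-> hz].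
    rewrite !Hmap_real; simpl. rewrite !gg_nonneg by lra. apply ttri_real; auto.
  - destruct x as [a a'], y as [b b'], z as [c c']; unfold car, Im in *; simpl in *. subst.
    rewrite !Hmap_real. apply TR_hom; auto.
  - apply TC_hom; auto.
Qed.

Theorem proposition2p1 : forall F : HF,
  hf_homotopy F F Hmap /\
  (forall x, car F x -> Hmap x 0 = x) /\
  (forall x, car F x -> Hmap x 1 = ph x).
Proof.
  intro F. split; [split; [intros; apply car_H; auto| split; [apply cont| intros; apply hom; auto]]|].
  split.
  - intros x _. rewrite Hmap_eq. unfold Rpower. replace (- 0 * ln (Cnorm x)) with 0 by ring.
    rewrite exp_0. destruct x; unfold Cscale; simpl; f_equal; ring.
  - intros x _. unfold Hmap, ph. destruct (Ceq_dec x C0); auto.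
    rewrite Rpower_Ropp, Rpower_1 by (apply Cnorm_pos; auto). reflexivity.
Qed.
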